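(* Let $\eta\in\Upsilon_{z_0}$ with $\mathsf w(\eta)=\cdots s_{i_1}s_{i_0}$ of period $N$. Then $-\eta\in\Upsilon_{z_0}$, and $\mathsf w(-\eta)=\cdots\mathsf y\mathsf y\mathsf y$ (the infinite leftward repetition of $\mathsf y$), where $\mathsf y=s_{i_0}s_{i_1}\cdots s_{i_{N-1}}$.
   Context: Let $\widetilde W$ be an affine Weyl group with simple reflections $s_i$ ($i\in\widetilde I$), acting on the right on $V^*$, with coroot lattice $Q^\vee$, affine hyperplane arrangement $\mathcal H_{\widetilde W}$, fundamental alcove $\mathcal A$, and alcoves $\mathcal A u$ ($u\in\widetilde W$) in bijection with $\widetilde W$. Fix $z_0$ in the interior of $\mathcal A$. $\Upsilon_{z_0}$ is the set of $\eta\in Q^\vee\setminus\{0\}$ such that the ray from $z_0$ in direction $\eta$ passes through no intersection of two or more hyperplanes of $\mathcal H_{\widetilde W}$. For such $\eta$, if the ray passes successively through alcoves $\mathcal A u_0=\mathcal A,\mathcal A u_1,\dots$, let $s_{i_j}$ be the simple reflection with $u_{j+1}=s_{i_j}u_j$ and define the infinite word (extending to the left) $\mathsf w(\eta)=\cdots s_{i_2}s_{i_1}s_{i_0}$; it is periodic, with period $N=N_\eta$. *)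

(* Defs.v *)
From HB Require Import structures.
From mathcomp Require Import all_boot all_order all_algebra.
From mathcomp Require Import classical_sets reals.
Set Implicit Arguments. Unset Strict Implicit. Unset Printing Implicit Defensive.
Import Order.TTheory GRing.Theory Num.Theory.
Local Open Scope ring_scope.
Local Open Scope classical_set_scope.

Section AffineWeyl.
Variables (R : realType) (n : nat).

(* V^* is identified with R^n (row vectors) via the standard inner product. *)
Definition dot (x y : 'rV[R]_n) : R := (x *m y^T) 0 0.

Definition coroot (a : 'rV[R]_n) : 'rV[R]_n := (2 / dot a a) *: a.

(* reflection of V^* across the affine hyperplane {x | <x,a> = k} *)
Definition refl (a : 'rV[R]_n) (k : R) (x : 'rV[R]_n) : 'rV[R]_n :=
  x - (dot x (coroot a) - k * 2 / dot a a) *: a.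

Definition root_system (Phi : seq 'rV[R]_n) : Prop :=
  [/\ 0 \notin Phi,
      (forall a b, a \in Phi -> b \in Phi -> b - dot b (coroot a) *: a \in Phi),
      (forall a b, a \in Phi -> b \in Phi -> exists k : int, dot b (coroot a) = k%:~R),
      (forall a (c : R), a \in Phi -> c *: a \in Phi -> c = 1 \/ c = -1)
    & (forall x, (forall a, a \in Phi -> dot x a = 0) -> x = 0)].

Definition irreducible_rs (Phi : seq 'rV[R]_n) : Prop :=
  forall P : pred 'rV[R]_n,
    (exists2 a, a \in Phi & P a) -> (exists2 b, b \in Phi & ~~ P b) ->
    exists a b, [/\ a \in Phi, b \in Phi, P a, ~~ P b & dot a b != 0].

Definition nonneg_comb (Delta : 'I_n -> 'rV[R]_n) (a : 'rV[R]_n) : Prop :=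
  exists c : 'I_n -> nat, a = \sum_(i < n) (c i)%:R *: Delta i.

Definition simple_system (Phi : seq 'rV[R]_n) (Delta : 'I_n -> 'rV[R]_n) : Prop :=
  (forall i, Delta i \in Phi) /\
  (forall a, a \in Phi -> nonneg_comb Delta a \/ nonneg_comb Delta (- a)).

Definition pos_root (Phi : seq 'rV[R]_n) (Delta : 'I_n -> 'rV[R]_n) a : Prop :=
  a \in Phi /\ nonneg_comb Delta a.

Definition highest_root (Phi : seq 'rV[R]_n) (Delta : 'I_n -> 'rV[R]_n) theta : Prop :=
  theta \in Phi /\ forall b, b \in Phi -> nonneg_comb Delta (theta - b).

Definition coroot_lattice (Phi : seq 'rV[R]_n) (eta : 'rV[R]_n) : Prop :=
  exists c : nat -> int, eta = \sum_(j < size Phi) (c j)%:~R *: coroot (Phi`_j).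

Definition hyperplane (Phi : seq 'rV[R]_n) (H : set 'rV[R]_n) : Prop :=
  exists a (k : int), a \in Phi /\ H = [set x | dot x a = k%:~R].

Definition fund_alcove (Phi : seq 'rV[R]_n) (Delta : 'I_n -> 'rV[R]_n) : set 'rV[R]_n :=
  [set x | forall a, pos_root Phi Delta a -> 0 < dot x a < 1].

(* simple reflections s_i, i in I~ = 'I_n.+1; index 0 is the affine node
   (reflection across {<x,theta> = 1}), index i.+1 is the reflection for Delta i *)
Definition sref (Delta : 'I_n -> 'rV[R]_n) (theta : 'rV[R]_n) (i : 'I_n.+1) :
  'rV[R]_n -> 'rV[R]_n :=
  match unlift ord0 i with
  | None => refl theta 1
  | Some k => refl (Delta k) 0
  end.

(* Right action: x.(s u) = (x.s).u.  Given the index sequence w = (i_0, i_1, ...),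
   uact w j is the map x |-> x.u_j where u_0 = 1 and u_{j+1} = s_{i_j} u_j. *)
Fixpoint uact (Delta : 'I_n -> 'rV[R]_n) theta (w : nat -> 'I_n.+1) (j : nat) :
  'rV[R]_n -> 'rV[R]_n :=
  match j with
  | 0 => id
  | j'.+1 => uact Delta theta w j' \o sref Delta theta (w j')
  end.

(* the alcove A u, where f is the map x |-> x.u *)
Definition alcove (Phi : seq 'rV[R]_n) Delta (f : 'rV[R]_n -> 'rV[R]_n) : set 'rV[R]_n :=
  f @` fund_alcove Phi Delta.

Definition Upsilon (Phi : seq 'rV[R]_n) (z0 eta : 'rV[R]_n) : Prop :=
  [/\ coroot_lattice Phi eta, eta != 0 &
      forall t : R, 0 <= t -> ~ exists H1 H2,
        [/\ hyperplane Phi H1, hyperplane Phi H2, H1 <> H2,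
            H1 (z0 + t *: eta) & H2 (z0 + t *: eta)]].

(* ray_word: the ray from z0 in direction eta passes successively through the
   alcoves A u_0 = A, A u_1, ... with u_{j+1} = s_{w j} u_j; i.e.
   w(eta) = ... s_{w 2} s_{w 1} s_{w 0}. *)
Definition ray_word (Phi : seq 'rV[R]_n) Delta theta (z0 eta : 'rV[R]_n)
  (w : nat -> 'I_n.+1) : Prop :=
  exists t : nat -> R,
    [/\ t 0%N = 0, (forall j, t j < t j.+1), (forall M : R, exists j, M < t j) &
        forall (j : nat) (s : R), t j < s -> s < t j.+1 ->
          alcove Phi Delta (uact Delta theta w j) (z0 + s *: eta)].

End AffineWeyl.

(* Main.v *)
Require Import Defs.
From HB Require Import structures.
From mathcomp Require Import all_boot all_order all_algebra all_fingroup.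
From mathcomp Require Import classical_sets reals.
From mathcomp Require Import ring lra zify.
Set Implicit Arguments. Unset Strict Implicit. Unset Printing Implicit Defensive.
Import Order.TTheory GRing.Theory Num.Theory.
Local Open Scope ring_scope.
Local Open Scope classical_set_scope.

Section Dot.
Variables (R : realType) (n : nat).
Implicit Types x y z a : 'rV[R]_n.

Lemma dotE x y : dot x y = \sum_j x 0 j * y 0 j.
Proof. by rewrite /dot mxE; apply: eq_bigr => j _; rewrite mxE. Qed.

Lemma dotC x y : dot x y = dot y x.
Proof. by rewrite !dotE; apply: eq_bigr => j _; rewrite mulrC. Qed.

Lemma dotDl x y z : dot (x + y) z = dot x z + dot y z.
Proof. by rewrite !dotE -big_split; apply: eq_bigr => j _; rewrite mxE mulrDl. Qed.

Lemma dotZl k x z : dot (k *: x) z = k * dot x z.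
Proof. by rewrite !dotE mulr_sumr; apply: eq_bigr => j _; rewrite mxE mulrA. Qed.

Lemma dotNl x z : dot (- x) z = - dot x z.
Proof. by rewrite -scaleN1r dotZl mulN1r. Qed.

Lemma dotBl x y z : dot (x - y) z = dot x z - dot y z.
Proof. by rewrite dotDl dotNl. Qed.

Lemma dotDr x y z : dot z (x + y) = dot z x + dot z y.
Proof. by rewrite !(dotC z) dotDl. Qed.
Lemma dotZr k x z : dot z (k *: x) = k * dot z x.
Proof. by rewrite !(dotC z) dotZl. Qed.
Lemma dotBr x y z : dot z (x - y) = dot z x - dot z y.
Proof. by rewrite !(dotC z) dotBl. Qed.
Lemma dotNr x z : dot z (- x) = - dot z x.
Proof. by rewrite !(dotC z) dotNl. Qed.
Lemma dot0l z : dot 0 z = 0.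
Proof. by rewrite -(scale0r 0) dotZl mul0r. Qed.
Lemma dot0r z : dot z 0 = 0.
Proof. by rewrite dotC dot0l. Qed.

Lemma dotxx_ge0 x : 0 <= dot x x.
Proof. by rewrite dotE; apply: sumr_ge0 => j _; rewrite -expr2 sqr_ge0. Qed.

Lemma dotxx_eq0 x : dot x x = 0 -> x = 0.
Proof.
rewrite dotE => /eqP; rewrite psumr_eq0; last by move=> j _; rewrite -expr2 sqr_ge0.
move=> /allP H; apply/matrixP => i j; rewrite (ord1 i) mxE.
have := H j (mem_index_enum j); rewrite -expr2 sqrf_eq0 => /eqP //.
Qed.

Lemma dot_coroot x a : dot x (coroot a) = 2 * dot x a / dot a a.
Proof. by rewrite /coroot dotZr mulrC mulrA [dot x a * 2]mulrC. Qed.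

Lemma refl_sub a k x y : refl a k x - refl a k y = (x - y) - dot (x - y) (coroot a) *: a.
Proof. rewrite /refl dotBl scalerBl. set u := dot x _; set v := dot y _. set m := k * 2 / _.
rewrite scalerBl scalerBl. rewrite opprB opprD opprB. 
apply/rowP => j; rewrite !mxE; lra. Qed.

End Dot.
Section Refl.
Variables (R : realType) (n : nat).
Implicit Types x y z a v : 'rV[R]_n.

Definition aff (f : 'rV[R]_n -> 'rV[R]_n) := forall u v, f u - f v = f (u - v) - f 0.
Definition isom (f : 'rV[R]_n -> 'rV[R]_n) := forall u v, dot (f u - f 0) (f v - f 0) = dot u v.
Definition phipres (Phi : seq 'rV[R]_n) (f : 'rV[R]_n -> 'rV[R]_n) :=
  forall a, a \in Phi -> f a - f 0 \in Phi.

Lemma aff_comp f g : aff f -> aff g -> aff (f \o g).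
Proof. move=> Hf Hg u v /=; by rewrite (Hf (g u) (g v)) (Hg u v) (Hf (g (u - v)) (g 0)). Qed.

Lemma isom_comp f g : aff f -> isom f -> isom g -> isom (f \o g).
Proof. move=> Af If Ig u v /=. by rewrite (Af (g u) (g 0)) (Af (g v) (g 0)) If Ig. Qed.

Lemma phipres_comp Phi f g : aff f -> phipres Phi f -> phipres Phi g -> phipres Phi (f \o g).
Proof. move=> Af Pf Pg a Ha /=. rewrite (Af (g a) (g 0)); exact: Pf (Pg _ Ha). Qed.

Lemma aff_id : aff id. Proof. by move=> u v; rewrite /= subr0. Qed.
Lemma isom_id : isom id. Proof. by move=> u v; rewrite /= !subr0. Qed.
Lemma phipres_id Phi : phipres Phi id. Proof. by move=> a Ha; rewrite /= subr0. Qed.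

Lemma dot_nz a : a != 0 -> dot a a != 0.
Proof. by move=> Ha; apply/eqP => /dotxx_eq0 /eqP; rewrite (negbTE Ha). Qed.

Lemma dot_a_coroot a : a != 0 -> dot a (coroot a) = 2.
Proof. move=> /dot_nz H; rewrite dot_coroot mulfK //. Qed.

Lemma refl_aff a k : aff (refl a k).
Proof. move=> u v; rewrite !refl_sub subr0 //. Qed.

Lemma refl_lin a k v : refl a k v - refl a k 0 = v - dot v (coroot a) *: a.
Proof. by rewrite refl_sub subr0. Qed.

Lemma refl_isom a k : a != 0 -> isom (refl a k).
Proof.
move=> Ha u v; rewrite !refl_lin !dotBl !dotBr !dotZl !dotZr ?dot_coroot.
have H := dot_nz Ha. rewrite (dotC a v). by field.
Qed.

Lemma refl_invol a k x : a != 0 -> refl a k (refl a k x) = x.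
Proof.
move=> Ha; have H := dot_nz Ha.
rewrite {1}/refl. set y := refl a k x.
have -> : dot y (coroot a) - k * 2 / dot a a = - (dot x (coroot a) - k * 2 / dot a a).
  rewrite /y /refl dotBl dotZl dot_a_coroot //. 
  set m := dot x _; set q := k * 2 / _. lra.
rewrite /y /refl scaleNr opprK subrK //.
Qed.

Lemma refl_line a k z s v : refl a k (z + s *: v) = refl a k z + s *: (refl a k v - refl a k 0).
Proof.
have E := refl_aff a k (z + s *: v) z. rewrite [z + s *: v - z]addrC addKr in E.
have -> : refl a k (z + s *: v) = refl a k z + (refl a k (s *: v) - refl a k 0) by rewrite -E [RHS]addrC subrK.
by rewrite !refl_lin dotZl scalerBr scalerA.
Qed.
End Refl.

Section Uact.
Variables (R : realType) (n : nat) (Phi : seq 'rV[R]_n) (Delta : 'I_n -> 'rV[R]_n) (theta : 'rV[R]_n).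
Hypothesis HPhi : root_system Phi.
Hypothesis Hsimple : forall i, Delta i \in Phi.
Hypothesis Htheta : theta \in Phi.

Definition sroot (i : 'I_n.+1) := match unlift ord0 i with None => theta | Some k => Delta k end.
Definition slev (i : 'I_n.+1) : R := match unlift ord0 i with None => 1 | Some k => 0 end.
Lemma sref_refl i x : sref Delta theta i x = refl (sroot i) (slev i) x.
Proof. by rewrite /sref /sroot /slev; case: unlift. Qed.
Lemma sroot_Phi i : sroot i \in Phi.
Proof. by rewrite /sroot; case: unlift. Qed.
Lemma Phi_nz a : a \in Phi -> a != 0.
Proof. by case: HPhi => H0 _ _ _ _ Ha; apply/eqP => E; move: H0; rewrite -E Ha. Qed.
Lemma sroot_nz i : sroot i != 0.
Proof. exact: Phi_nz (sroot_Phi i). Qed.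

Local Notation sr := (sref Delta theta).
Lemma sref_aff i : aff (sr i).
Proof. by move=> u v; rewrite !sref_refl; exact: refl_aff. Qed.
Lemma sref_isom i : isom (sr i).
Proof. by move=> u v; rewrite !sref_refl; exact: (refl_isom (slev i) (sroot_nz i) u v). Qed.
Lemma sref_invol i x : sr i (sr i x) = x.
Proof. by rewrite !sref_refl refl_invol // sroot_nz. Qed.
Lemma sref_line i z s v : sr i (z + s *: v) = sr i z + s *: (sr i v - sr i 0).
Proof. by rewrite !sref_refl refl_line. Qed.
Lemma sref_phipres i : phipres Phi (sr i).
Proof.
move=> b Hb; rewrite !sref_refl refl_lin.
by case: HPhi => _ H2 _ _ _; apply: H2 => //; exact: sroot_Phi.
Qed.

Local Notation ua := (uact Delta theta).
Lemma uact_aff w j : aff (ua w j).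
Proof. elim: j => [|j IH] /=; [exact: aff_id | exact: aff_comp IH (sref_aff _)]. Qed.
Lemma uact_isom w j : isom (ua w j).
Proof. elim: j => [|j IH] /=; [exact: isom_id | exact: isom_comp (uact_aff _ _) IH (sref_isom _)]. Qed.
Lemma uact_phipres w j : phipres Phi (ua w j).
Proof. elim: j => [|j IH] /=; [exact: phipres_id | exact: phipres_comp (uact_aff _ _) IH (sref_phipres _)]. Qed.

Lemma uact_ext w w' j x : (forall i, w i = w' i) -> ua w j x = ua w' j x.
Proof. move=> E; elim: j x => [|j IH] x //=; by rewrite E IH. Qed.

Lemma uact_shift w a j x : ua w (a + j) x = ua w a (ua (fun i => w (a + i)%N) j x).
Proof. elim: j x => [|j IH] x /=; first by rewrite addn0. by rewrite addnS /= IH. Qed.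

End Uact.

Section FinOrder.
Variables (R : realType) (n : nat) (Phi : seq 'rV[R]_n).
Hypothesis Hspan : forall x : 'rV[R]_n, (forall a, a \in Phi -> dot x a = 0) -> x = 0.
Variable f : 'rV[R]_n -> 'rV[R]_n.
Hypotheses (Af : aff f) (If : isom f) (Pf : phipres Phi f).

Let L x := f x - f 0.
Lemma L_sub u v : L (u - v) = L u - L v.
Proof. by rewrite /L -Af opprB addrA subrK. Qed.
Lemma L_inj : injective L.
Proof.
move=> x y E; apply/eqP; rewrite -subr_eq0; apply/eqP/dotxx_eq0.
have H0 : L (x - y) = 0 by rewrite L_sub E subrr.
by rewrite -If -/(L (x - y)) H0 dot0l.
Qed.

Lemma iterL_sub k u v : iter k L (u - v) = iter k L u - iter k L v.
Proof. elim: k => [|k IH] //=; by rewrite IH L_sub. Qed.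
Lemma iterL_dot k u v : dot (iter k L u) (iter k L v) = dot u v.
Proof. elim: k => [|k IH] //=; by rewrite If. Qed.
Lemma iterf_sub k u v : iter k f u - iter k f v = iter k L (u - v).
Proof.
elim: k u v => [|k IH] u v //.
rewrite !iterSr IH; congr (iter k L _).
by rewrite L_sub /L opprB addrA subrK.
Qed.

Let T := seq_sub Phi.
Let g (x : T) : T := SeqSub (Pf (ssvalP x)).
Lemma g_inj : injective g.
Proof. move=> x y /(congr1 val) /= /L_inj E; exact: val_inj. Qed.

Lemma fin_order : exists2 d, (0 < d)%N & forall x, iter d L x = x.
Proof.
pose p := perm g_inj. exists #[p]%g; first exact: order_gt0.
have Hphi : forall a, a \in Phi -> iter #[p]%g L a = a.
  move=> a Ha; pose x : T := SeqSub Ha.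
  have E : forall k, val (iter k p x) = iter k L a.
    by elim=> [|k IH] //=; rewrite permE /= IH.
  by rewrite -E -permX expg_order perm1.
move=> x; apply/eqP; rewrite -subr_eq0; apply/eqP/Hspan => a Ha.
by rewrite dotBl -{1}(Hphi a Ha) iterL_dot subrr.
Qed.
End FinOrder.

Section Period.
Local Open Scope nat_scope.
Variables (A : Type) (w : nat -> A) (N : nat).
Hypothesis HN : (0 < N)%N.
Hypothesis Hper : forall j, w (j + N)%N = w j.

Lemma wper k i : w (k * N + i)%N = w i.
Proof.
elim: k => [|k IH]; first by rewrite mul0n add0n.
by rewrite mulSn -addnA addnC Hper IH.
Qed.

Lemma wmod x : w x = w (x %% N).
Proof. by rewrite {1}(divn_eq x N) wper. Qed.

Lemma wrev d j : (j < d * N)%N -> w (N.-1 - j %% N)%N = w (d * N - j.+1)%N.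
Proof.
move=> Hj; rewrite [RHS]wmod; congr w.
set q := j %/ N; set r := j %% N.
have Hr : (r < N)%N by rewrite ltn_mod.
have Ej : j = (q * N + r)%N by rewrite /q /r -divn_eq.
clearbody q r.
have Hq : (q < d)%N.
  rewrite ltnNge; apply/negP => Hdq.
  have : (d * N <= q * N)%N by rewrite leq_mul2r Hdq orbT.
  lia.
have -> : (d * N - j.+1 = (d - q.+1) * N + (N - r.+1))%N.
  rewrite Ej mulnBl mulSn.
  have : (q.+1 * N <= d * N)%N by rewrite leq_mul2r Hq orbT.
  rewrite mulSn. lia.
rewrite modnMDl modn_small; lia.
Qed.

Lemma wK d j : w (N.-1 - (j + d * N) %% N)%N = w (N.-1 - j %% N)%N.
Proof. by rewrite addnC modnMDl. Qed.
End Period.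

Section Geom.
Variables (R : realType) (n : nat) (Phi : seq 'rV[R]_n) (Delta : 'I_n -> 'rV[R]_n) (theta : 'rV[R]_n).
Hypothesis HPhi : root_system Phi.
Hypothesis Hsim : simple_system Phi Delta.
Hypothesis Hhigh : highest_root Phi Delta theta.
Variable k0 : 'I_n.
Local Notation A := (fund_alcove Phi Delta).

Lemma dot_line (z v a : 'rV[R]_n) (s : R) : dot (z + s *: v) a = dot z a + s * dot v a.
Proof. by rewrite dotDl dotZl. Qed.

Lemma A_convex (z v : 'rV[R]_n) (s1 s s2 : R) : s1 <= s -> s <= s2 -> A (z + s1 *: v) -> A (z + s2 *: v) -> A (z + s *: v).
Proof.
move=> h1 h2 H1 H2 a Ha; have := H1 a Ha; have := H2 a Ha; rewrite !dot_line.
set p := dot z a; set q := dot v a.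
move=> /andP[a1 a2] /andP[b1 b2]; apply/andP; split.
- case: (lerP 0 q) => hq; nra.
- case: (lerP 0 q) => hq; nra.
Qed.

Lemma open_list (z v : 'rV[R]_n) (l : seq 'rV[R]_n) : exists2 e : R, 0 < e & forall e', 0 < e' -> e' <= e ->
  forall a, a \in l -> 0 < dot z a < 1 -> 0 < dot z a - e' * dot v a < 1.
Proof.
elim: l => [|a l [e He IH]]; first by exists 1 => // e' _ _ a.
case: (boolP (0 < dot z a < 1)) => [/andP[h1 h2]|hn].
- pose m := Num.min (dot z a) (1 - dot z a).
  have hm : 0 < m by rewrite lt_min h1 subr_gt0 h2.
  exists (Num.min e (m / (`|dot v a| + 1))).
    by rewrite lt_min He divr_gt0 // ltr_pwDr // normr_ge0.
  move=> e' h0 he b; rewrite inE => /orP[/eqP->|Hb] hb; last first.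
    by apply: IH => //; apply: le_trans he _; rewrite ge_min lexx.
  have he2 : e' <= m / (`|dot v a| + 1) by apply: le_trans he _; rewrite ge_min lexx orbT.
  have hpos : 0 < `|dot v a| + 1 by rewrite ltr_pwDr // normr_ge0.
  have he3 : e' * (`|dot v a| + 1) <= m by rewrite -ler_pdivlMr.
  have hm1 : m <= dot z a by rewrite ge_min lexx.
  have hm2 : m <= 1 - dot z a by rewrite ge_min lexx orbT.
  have n1 : dot v a <= `|dot v a| := ler_norm _.
  have n2 : - dot v a <= `|dot v a| by rewrite -normrN ler_norm.
  apply/andP; split; nra.
- exists e => // e' h0 he b; rewrite inE => /orP[/eqP->|Hb] hb.
    by rewrite hb in hn.
  exact: IH.
Qed.

Lemma A_open (z v : 'rV[R]_n) : A z -> exists2 e : R, 0 < e & A (z - e *: v).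
Proof.
move=> Hz; have [e He H] := open_list z v Phi; exists e => // a Ha.
rewrite -scaleNr dot_line mulNr; apply: H => //; first by case: Ha.
exact: Hz.
Qed.


Lemma neg_Phi (a : 'rV[R]_n) : a \in Phi -> - a \in Phi.
Proof.
move=> Ha; case: HPhi => H0 H2 _ _ _.
have := H2 a a Ha Ha; rewrite dot_a_coroot; last first.
  by apply/eqP => E; move: H0; rewrite -E Ha.
by rewrite scaler_nat mulr2n opprD addrA subrr sub0r.
Qed.

Lemma A_bound (x a : 'rV[R]_n) : A x -> a \in Phi -> -1 < dot x a < 1.
Proof.
move=> Hx Ha; case: Hsim => _ /(_ a Ha) [Hp|Hn].
  by have /andP[h1 h2] := Hx a (conj Ha Hp); apply/andP; split => //; lra.
have /andP[h1 h2] := Hx (- a) (conj (neg_Phi Ha) Hn).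
rewrite dotNr in h1 h2; apply/andP; split; lra.
Qed.

Lemma ind_sum (k : 'I_n) : \sum_(i < n) ((i == k) : nat)%:R *: Delta i = Delta k.
Proof.
rewrite (bigD1 k) //= eqxx scale1r big1 ?addr0 // => i /negbTE ->; by rewrite scale0r.
Qed.

Lemma pos_Delta k : pos_root Phi Delta (Delta k).
Proof. split; first by case: Hsim. by exists (fun i => (i == k) : nat); rewrite ind_sum. Qed.

Lemma pos_theta : pos_root Phi Delta theta.
Proof.
case: Hhigh => Ht /(_ (Delta k0)) H; split => //.
have [c Hc] := H (pos_Delta k0).1.
exists (fun i => c i + ((i == k0) : nat))%N.
have -> : theta = (theta - Delta k0) + Delta k0 by rewrite subrK.
rewrite Hc -ind_sum -big_split /=; apply: eq_bigr => i _; by rewrite natrD scalerDl.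
Qed.

Lemma refl_dot (a x : 'rV[R]_n) (k : R) : a != 0 -> dot (refl a k x) a = 2 * k - dot x a.
Proof.
move=> Ha; have H := dot_nz Ha.
rewrite /refl dotBl dotZl dot_coroot. field. exact: H.
Qed.

Lemma A_disj i (x : 'rV[R]_n) : A x -> ~ A (sref Delta theta i x).
Proof.
move=> Hx; rewrite /sref; case: unlift => [k|] Hy.
- have /andP[h1 _] := Hx _ (pos_Delta k).
  have /andP[h2 _] := Hy _ (pos_Delta k).
  rewrite refl_dot in h2; last by apply: Phi_nz (pos_Delta k).1.
  lra.
- have /andP[_ h1] := Hx _ pos_theta.
  have /andP[_ h2] := Hy _ pos_theta.
  rewrite refl_dot in h2; last by apply: Phi_nz (pos_theta).1.
  lra.
Qed.
End Geom.

Section Ups.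
Variables (R : realType) (n : nat) (Phi : seq 'rV[R]_n).
Hypothesis HPhi : root_system Phi.

Lemma lattice_int (eta a : 'rV[R]_n) : coroot_lattice Phi eta -> a \in Phi ->
  exists m : int, dot eta a = m%:~R.
Proof.
move=> [c ->] Ha.
elim/big_ind: _ => [|x y [m1 E1] [m2 E2]|j _].
- by exists 0; rewrite dot0l.
- by exists (m1 + m2); rewrite dotDl E1 E2 rmorphD.
- case: HPhi => _ _ H3 _ _.
  have [k Hk] := H3 _ a (mem_nth 0 (ltn_ord j)) Ha.
  by exists (c j * k); rewrite dotZl dotC Hk rmorphM.
Qed.

Lemma hyp_trans (H : set 'rV[R]_n) (v : 'rV[R]_n) :
  (forall a, a \in Phi -> exists m : int, dot v a = m%:~R) ->
  hyperplane Phi H -> hyperplane Phi [set y | H (y - v)].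
Proof.
move=> Hv [a [m [Ha ->]]]; have [e He] := Hv a Ha.
exists a, (m + e); split => //.
apply/boolp.funext => y /=; apply/boolp.propext.
rewrite dotBl He rmorphD; split => E; lra.
Qed.

Lemma Ups_neg (z0 eta : 'rV[R]_n) : Upsilon Phi z0 eta -> Upsilon Phi z0 (- eta).
Proof.
case=> Hl Hnz Hh; split.
- case: Hl => c E; exists (fun j => - c j); rewrite E -sumrN; apply: eq_bigr => j _.
  by rewrite rmorphN scaleNr.
- by rewrite oppr_eq0.
move=> t ht [H1 [H2 [h1 h2 hne p1 p2]]].
pose k := Num.Def.archi_bound t.
have hk : t < k%:R := archi_boundP ht.
have Hv : forall a, a \in Phi -> exists m : int, dot (k%:R *: eta) a = m%:~R.
  move=> a Ha; have [m Hm] := lattice_int Hl Ha.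
  by exists (k%:Z * m); rewrite dotZl Hm intrM.
apply: (Hh (k%:R - t)); first lra.
exists [set y | H1 (y - k%:R *: eta)], [set y | H2 (y - k%:R *: eta)].
have Ep : z0 + (k%:R - t) *: eta - k%:R *: eta = z0 + t *: - eta.
  by apply/rowP => j; rewrite !mxE; lra.
split.
- exact: hyp_trans.
- exact: hyp_trans.
- move=> E; apply: hne; apply/boolp.funext => x.
  have := congr1 (fun S : set 'rV[R]_n => S (x + k%:R *: eta)) E => /=.
  by rewrite addrK.
- by rewrite /= Ep.
- by rewrite /= Ep.
Qed.
End Ups.

Section Par.
Variables (R : realType) (n : nat) (Phi : seq 'rV[R]_n).
Hypothesis Hspan : forall x : 'rV[R]_n, (forall a, a \in Phi -> dot x a = 0) -> x = 0.

Lemma archi_zero (C E D : R) : (forall k : nat, `|C - k%:R * D| <= E) -> D = 0.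
Proof.
move=> H; apply/eqP/negPn/negP => HD.
have hE : 0 <= E by apply: le_trans (H 0%N); rewrite normr_ge0.
have hD : 0 < `|D| by rewrite normr_gt0.
pose k := Num.Def.archi_bound ((E + `|C|) / `|D|).
have hk : (E + `|C|) / `|D| < k%:R.
  apply: archi_boundP; apply: divr_ge0; [by rewrite addr_ge0 // normr_ge0 | exact: ltW].
have hk2 : E + `|C| < k%:R * `|D| by rewrite -ltr_pdivrMr.
have := H k; rewrite ler_norml => /andP[h1 h2].
have c1 : C <= `|C| := ler_norm C.
have c2 : - C <= `|C| by rewrite -normrN ler_norm.
have hk0 : 0 <= (k%:R : R) by [].
case: (ltrP 0 D) => hs.
- rewrite (gtr0_norm hs) in hk2; lra.
- rewrite (ler0_norm hs) in hk2; lra.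
Qed.

Lemma par_lemma (z e bv : 'rV[R]_n) :
  (forall k : nat, exists s : R, forall a, a \in Phi -> -1 < dot (z + s *: e - k%:R *: bv) a < 1) ->
  e != 0 -> exists c : R, bv = c *: e.
Proof.
move=> H He.
have Hmin : forall a a', a \in Phi -> a' \in Phi ->
    dot bv a * dot e a' - dot e a * dot bv a' = 0.
  move=> a a' Ha Ha'.
  apply: (@archi_zero (dot z a * dot e a' - dot e a * dot z a') (`|dot e a'| + `|dot e a|)).
  move=> k; have [s Hs] := H k.
  have := Hs a Ha; have := Hs a' Ha'.
  rewrite !dotBl !dotDl !dotZl.
  set X := dot z a + s * dot e a - k%:R * dot bv a.
  set Y := dot z a' + s * dot e a' - k%:R * dot bv a'.
  move=> hY hX.
  have -> : dot z a * dot e a' - dot e a * dot z a' -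
      k%:R * (dot bv a * dot e a' - dot e a * dot bv a') = dot e a' * X - dot e a * Y.
    rewrite /X /Y; ring.
  apply: le_trans (ler_normB _ _) _; rewrite !normrM.
  have nX : `|X| <= 1 by rewrite ler_norml; case/andP: hX => ??; apply/andP; split; lra.
  have nY : `|Y| <= 1 by rewrite ler_norml; case/andP: hY => ??; apply/andP; split; lra.
  apply: lerD; rewrite -[X in _ <= X]mulr1; apply: ler_wpM2l => //; exact: normr_ge0.
have [a0 Ha0 He0] : exists2 a0, a0 \in Phi & dot e a0 != 0.
  case: (boolP (has (fun a => dot e a != 0) Phi)) => [/hasP[a0 Ha0 He0]|/hasPn Hn].
    by exists a0.
  exfalso; move/eqP: He; apply; apply: Hspan => a Ha.
  by have := Hn a Ha; rewrite negbK => /eqP.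
exists (dot bv a0 / dot e a0).
apply/eqP; rewrite -subr_eq0; apply/eqP/Hspan => a Ha.
have Hm := Hmin a a0 Ha Ha0.
rewrite dotBl dotZl.
have -> : dot bv a - dot bv a0 / dot e a0 * dot e a =
   (dot bv a * dot e a0 - dot e a * dot bv a0) / dot e a0 by field.
by rewrite Hm mul0r.
Qed.
End Par.

Section Main.
Variables (R : realType) (n : nat) (Phi : seq 'rV[R]_n) (Delta : 'I_n -> 'rV[R]_n)
  (theta z0 eta : 'rV[R]_n) (w : nat -> 'I_n.+1) (N : nat).
Hypothesis HPhi : root_system Phi.
Hypothesis Hsim : simple_system Phi Delta.
Hypothesis Hhigh : highest_root Phi Delta theta.
Hypothesis HN : (0 < N)%N.
Hypothesis Hper : forall j, w (j + N)%N = w j.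
Variable d : nat.
Hypothesis Hd : (0 < d)%N.
Hypothesis HdL : forall x, iter d (fun y => uact Delta theta w N y - uact Delta theta w N 0) x = x.

Local Notation ua := (uact Delta theta).
Local Notation sr := (sref Delta theta).
Local Notation A := (fund_alcove Phi Delta).
Let HD : forall i, Delta i \in Phi. Proof. by case: Hsim. Qed.
Let HT : theta \in Phi. Proof. by case: Hhigh. Qed.

Definition K := (d * N)%N.
Definition b := ua w K 0.
Definition w' := fun j => w (N.-1 - j %% N)%N.

Lemma K_gt0 : (0 < K)%N. Proof. by rewrite /K muln_gt0 Hd HN. Qed.

Lemma M1 k j x : ua w (k * N + j) x = ua w (k * N) (ua w j x).
Proof. rewrite uact_shift; congr ua; apply: uact_ext => i; exact: wper. Qed.

Lemma M2 k x : ua w (k * N) x = iter k (ua w N) x.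
Proof.
elim: k x => [|k IH] x //=.
by rewrite mulSn addnC M1 IH -iterSr.
Qed.

Lemma M3 x : ua w K x = x + b.
Proof.
have E := iterf_sub (uact_aff Delta theta w N) d x 0.
rewrite subr0 HdL -!M2 in E.
by rewrite /b /K; apply/eqP; rewrite -subr_eq; apply/eqP.
Qed.

Lemma M4a m x : ua w (K + m) x = ua w m x + b.
Proof. by rewrite /K M1 M3. Qed.

Lemma M4 q j x : ua w (q * K + j) x = ua w j x + q%:R *: b.
Proof.
elim: q => [|q IH]; first by rewrite mul0n add0n scale0r addr0.
by rewrite mulSn -addnA M4a IH -addrA -[(q.+1)]addn1 natrD scalerDl scale1r.
Qed.

Lemma M5 j : w' (j + K) = w' j.
Proof. exact: wK. Qed.

Lemma M6 j : (j <= K)%N -> forall x, ua w (K - j) x = ua w' j x + b.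
Proof.
elim: j => [|j IH] Hj x; first by rewrite subn0 M3.
have Hj' : (j < K)%N by [].
rewrite -[x in LHS](sref_invol HPhi HD HT (w (K - j.+1)%N)).
have -> : ua w (K - j.+1) (sr (w (K - j.+1)) (sr (w (K - j.+1)) x)) = ua w (K - j) (sr (w (K - j.+1)) x).
  by rewrite -(subnSK Hj').
rewrite IH; last exact: ltnW.
change (ua w' j.+1 x) with (ua w' j (sr (w' j) x)).
have -> : w' j = w (K - j.+1)%N by rewrite /w' (wrev HN Hper Hj').
by [].
Qed.

Lemma M7 x : ua w' K x = x - b.
Proof.
have E := M6 (leqnn K) x; rewrite subnn in E.
change (ua w 0 x) with x in E.
by rewrite [in RHS]E addrK.
Qed.

Lemma M8 q r x : ua w' (q * K + r) x = ua w' r x - q%:R *: b.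
Proof.
elim: q => [|q IH]; first by rewrite mul0n add0n scale0r subr0.
rewrite mulSn -addnA uact_shift.
rewrite (@uact_ext _ _ Delta theta _ w'); last by move=> i; rewrite addnC M5.
rewrite M7 IH -[(q.+1)]addn1 natrD scalerDl scale1r opprD addrA.
done.
Qed.

Lemma M9 q r x : (r <= K)%N -> ua w' (q * K + r) x = ua w (K - r) x - (q.+1)%:R *: b.
Proof.
move=> Hr; rewrite M8; have E := M6 Hr x.
have -> : ua w' r x = ua w (K - r) x - b by rewrite E addrK.
apply/rowP => i; rewrite !mxE -[(q.+1)]addn1 natrD; lra.
Qed.

Hypothesis Hz0 : A z0.
Variable k0 : 'I_n.
Hypothesis Hspan : forall x : 'rV[R]_n, (forall a, a \in Phi -> dot x a = 0) -> x = 0.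
Hypothesis Heta : eta != 0.
Variable t : nat -> R.
Hypotheses (t0 : t 0%N = 0) (tinc : forall j, t j < t j.+1)
  (tray : forall (j : nat) (s : R), t j < s -> s < t j.+1 ->
          alcove Phi Delta (ua w j) (z0 + s *: eta)).

Lemma t_mono i j : (i <= j)%N -> t i <= t j.
Proof.
move=> /subnK <-; elim: (j - i)%N => [|m IH]; first by rewrite add0n.
by apply: le_trans IH _; rewrite addSn; apply: ltW.
Qed.

Lemma alc_fwd f g v p : (forall x, f x = g x + v) -> alcove Phi Delta f p -> alcove Phi Delta g (p - v).
Proof. by move=> E [x Ax <-]; exists x => //; rewrite E addrK. Qed.
Lemma alc_bwd f g v p : (forall x, f x = g x + v) -> alcove Phi Delta g (p - v) -> alcove Phi Delta f p.
Proof. by move=> E [x Ax Ex]; exists x => //; rewrite E Ex subrK. Qed.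
Lemma alc_id p : alcove Phi Delta id p -> A p.
Proof. by case=> x Ax <-. Qed.
Lemma alc_sr i p : alcove Phi Delta (sr i) p -> A (sr i p).
Proof. by case=> x Ax <-; rewrite (sref_invol HPhi HD HT). Qed.

Definition P s := A (z0 + s *: eta).
Definition Qs i s := A (sr i (z0 + s *: eta)).

Lemma P_conv s1 s s2 : s1 <= s -> s <= s2 -> P s1 -> P s2 -> P s.
Proof. exact: A_convex. Qed.
Lemma Q_conv i s1 s s2 : s1 <= s -> s <= s2 -> Qs i s1 -> Qs i s2 -> Qs i s.
Proof. rewrite /Qs !sref_line; exact: A_convex. Qed.
Lemma PQ_disj i s : P s -> Qs i s -> False.
Proof. move=> HP; exact: (A_disj HPhi Hsim Hhigh k0 HP). Qed.

Lemma F1 s : 0 <= s -> s < t 1 -> P s.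
Proof.
rewrite le_eqVlt => /orP[/eqP<-|h0] h1; first by rewrite /P scale0r addr0.
by apply: alc_id; apply: (tray (j:=0)) => //; rewrite t0.
Qed.

Lemma F2 s : t 1 < s -> s < t 2 -> Qs (w 0) s.
Proof. move=> h1 h2; apply: alc_sr; exact: (tray (j:=1)). Qed.

Lemma X2 s : Qs (w 0) s -> t 1 <= s.
Proof.
move=> Hq; rewrite leNgt; apply/negP => hs.
have t01 := tinc 0; have t12 := tinc 1; rewrite t0 in t01.
have Hm : Qs (w 0) ((t 1 + t 2) / 2) by apply: F2; lra.
case: (lerP 0 s) => h0.
- by apply: (PQ_disj (F1 h0 hs) Hq).
- have Q0 : Qs (w 0) 0 by apply: (Q_conv (s1 := s) (s2 := (t 1 + t 2) / 2)) => //; lra.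
  by apply: (PQ_disj (F1 (lexx 0) t01) Q0).
Qed.

Lemma b_par : exists c : R, b = c *: eta.
Proof.
apply: (par_lemma Hspan _ Heta) => k.
have h := tinc (k * K)%N.
exists ((t (k * K)%N + t (k * K).+1) / 2) => a Ha.
apply: (A_bound HPhi Hsim) => //.
apply: alc_id; apply: (alc_fwd (g := ua w 0)); last first.
  by apply: tray; lra.
by move=> x; rewrite -[(k * K)%N]addn0 M4.
Qed.

Variable c : R.
Hypothesis Hc : b = c *: eta.

Lemma shift_eq s v : z0 + s *: eta - v *: eta = z0 + (s - v) *: eta.
Proof. by rewrite scalerBl addrA. Qed.

Lemma G1 s : t (K.+1) < s -> s < t (K.+2) -> Qs (w 0) (s - c).
Proof.
move=> h1 h2; have := tray h1 h2.
move/(alc_fwd (g := ua w 1) (v := b)) => H.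
have /alc_sr : alcove Phi Delta (sr (w 0)) (z0 + s *: eta - b).
  by apply: H => x; rewrite -[K.+1]addn1 M4a.
by rewrite Hc shift_eq.
Qed.

Lemma G2 : t 1 + c <= t (K.+1).
Proof.
rewrite leNgt; apply/negP => h.
have hK := tinc K.+1.
case: (lerP (t 1 + c) (t K.+2)) => h2.
- have := X2 (G1 (s := (t K.+1 + t 1 + c) / 2) _ _); lra.
- have := X2 (G1 (s := (t K.+1 + t K.+2) / 2) _ _); lra.
Qed.

Lemma G3 s : t K < s -> s < t K.+1 -> P (s - c).
Proof.
move=> h1 h2; have := tray h1 h2.
move/(alc_fwd (g := id) (v := b)) => H.
rewrite /P -shift_eq -Hc; apply: alc_id; apply: H => x; exact: M3.
Qed.

Lemma G4 s : t K.-1 < s -> s < t K -> Qs (w' 0) (s - c).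
Proof.
have EK : K.-1.+1 = K by rewrite prednK // K_gt0.
move=> h1; rewrite -{1}EK => h2; have := tray h1 h2.
move/(alc_fwd (g := sr (w' 0)) (v := b)) => H.
rewrite /Qs -shift_eq -Hc; apply: alc_sr; apply: H => x.
have := M6 (j := 1) K_gt0 x; rewrite subn1 => ->; done.
Qed.

Lemma G5 : t K < c.
Proof.
rewrite ltNge; apply/negP => hc.
have [e He Pe] := A_open eta Hz0.
have Pe' : P (- e) by rewrite /P scaleNr.
have hK := tinc K.
have EK : K.-1.+1 = K by rewrite prednK // K_gt0.
have hK1 := tinc K.-1; rewrite EK in hK1.
set y := (t K + t K.+1) / 2 - c.
have Py : P y by rewrite /y; have := G3 (s := (t K + t K.+1) / 2); rewrite /P; apply; lra.
pose x := if t K.-1 - c <= - e then (- e + (t K - c)) / 2 else (t K.-1 - c + (t K - c)) / 2.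
have [hx1 hx2 hx3] : [/\ t K.-1 - c < x, x < t K - c & - e < x].
  by rewrite /x; case: ifP => hh; split; lra.
have Qx : Qs (w' 0) x by have := G4 (s := x + c); rewrite addrK; apply; lra.
have Px : P x by apply: (P_conv (s1 := - e) (s2 := y)) => //; rewrite /y; lra.
exact: PQ_disj Px Qx.
Qed.

Definition Rr (i : nat) : R := ((i %/ K)%N.+1)%:R * c - t (K - i %% K)%N.
Definition tp (j : nat) : R := if j is i.+1 then Rr i else 0.

Lemma Rr_eq q r : (r < K)%N -> Rr (q * K + r) = (q.+1)%:R * c - t (K - r)%N.
Proof.
move=> Hr; rewrite /Rr divnMDl ?K_gt0 // divn_small // addn0 modnMDl modn_small //.
Qed.

Lemma decomp i : exists q r, (r < K)%N /\ i = (q * K + r)%N.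
Proof. exists (i %/ K)%N, (i %% K)%N; split; [by rewrite ltn_mod K_gt0 | exact: divn_eq]. Qed.

Lemma c_pos : 0 < c.
Proof. have := t_mono (leq0n K); rewrite t0 => h; have := G5; lra. Qed.

Lemma t1_pos : 0 < t 1.
Proof. by have := tinc 0; rewrite t0. Qed.

Lemma Tinc j : tp j < tp j.+1.
Proof.
have hc := G5; have h1 := t1_pos.
case: j => [|i] /=.
  by rewrite -[0%N](addn0 (0 * K)) Rr_eq ?K_gt0 // subn0 mul1r; lra.
have [q [r [Hr ->]]] := decomp i.
rewrite Rr_eq //.
move: (Hr); rewrite leq_eqVlt => /orP[/eqP Er | Hlt].
- have -> : (q * K + r).+1 = (q.+1 * K + 0)%N by rewrite addn0 mulSn -Er; lia.
  rewrite Rr_eq ?K_gt0 // subn0.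
  have -> : (K - r = 1)%N by lia.
  rewrite -[(q.+2)]addn1 -[(q.+1)]addn1 !natrD; lra.
- rewrite -addnS Rr_eq //.
  have := tinc (K - r.+1)%N; rewrite (subnSK Hr) => h; lra.
Qed.

Lemma Tunb (M : R) : exists j, M < tp j.
Proof.
have hc := c_pos; have htK : 0 <= t K by have := t_mono (leq0n K); rewrite t0.
pose Q := Num.Def.archi_bound ((`|M| + t K) / c).
have hQ : (`|M| + t K) / c < Q%:R.
  by apply: archi_boundP; apply: divr_ge0; [rewrite addr_ge0 // normr_ge0 | exact: ltW].
have hQ2 : `|M| + t K < Q%:R * c by rewrite -ltr_pdivrMr.
exists (Q * K + 0)%N.+1; rewrite /= Rr_eq ?K_gt0 // subn0 -[(Q.+1)]addn1 natrD.
have := ler_norm M; lra.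
Qed.

Lemma vec_eq s (m : nat) : z0 + s *: - eta - - (m%:R *: (c *: eta)) = z0 + (m%:R * c - s) *: eta.
Proof. by apply/rowP => i; rewrite !mxE; ring. Qed.

Lemma Tray j s : tp j < s -> s < tp j.+1 -> alcove Phi Delta (ua w' j) (z0 + s *: - eta).
Proof.
have hc := G5; have h1 := t1_pos; have hG2 := G2.
case: j => [|i].
  change (0 < s -> s < Rr 0 -> alcove Phi Delta id (z0 + s *: - eta)).
  have R0 : Rr 0 = c - t K by rewrite /Rr div0n mod0n subn0 mul1r.
  rewrite R0 => hs1 hs2.
  exists (z0 + s *: - eta) => //.
  have := G3 (s := c - s); rewrite /P; rewrite (_ : c - s - c = - s); last by ring.
  rewrite scaleNr -scalerN; apply; lra.
change (Rr i < s -> s < Rr i.+1 -> alcove Phi Delta (ua w' i.+1) (z0 + s *: - eta)).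
have [q [r [Hr ->]]] := decomp i.
rewrite Rr_eq //.
move: (Hr); rewrite leq_eqVlt => /orP[/eqP Er | Hlt].
- have -> : (q * K + r).+1 = (q.+1 * K + 0)%N by rewrite addn0 mulSn -Er; lia.
  rewrite Rr_eq ?K_gt0 // subn0.
  have -> : (K - r = 1)%N by lia.
  move=> hs1 hs2.
  apply: (alc_bwd (g := id) (v := - ((q.+1)%:R *: b))).
    by move=> x; rewrite M8.
  rewrite Hc vec_eq; exists (z0 + ((q.+1)%:R * c - s) *: eta) => //.
  have := G3 (s := (q.+2)%:R * c - s); rewrite /P.
  rewrite (_ : (q.+2)%:R * c - s - c = (q.+1)%:R * c - s); last first.
    by rewrite -[(q.+2)]addn1 natrD; ring.
  apply; rewrite -[(q.+2)]addn1 -[(q.+1)]addn1 !natrD in hs1 hs2 *; lra.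
- rewrite -addnS Rr_eq // => hs1 hs2.
  apply: (alc_bwd (g := ua w (K - r.+1)) (v := - ((q.+1)%:R *: b))).
    by move=> x; rewrite M9.
  rewrite Hc vec_eq; apply: tray; first lra.
  rewrite (subnSK Hr); lra.
Qed.
End Main.

Unset Implicit Arguments.
Theorem lemma3p2 (R : realType) (n : nat) (Phi : seq 'rV[R]_n)
  (Delta : 'I_n -> 'rV[R]_n) (theta z0 eta : 'rV[R]_n)
  (w : nat -> 'I_n.+1) (N : nat) :
  root_system Phi -> irreducible_rs Phi -> simple_system Phi Delta ->
  highest_root Phi Delta theta ->
  fund_alcove Phi Delta z0 ->
  Upsilon Phi z0 eta ->
  ray_word Phi Delta theta z0 eta w ->
  (0 < N)%N -> (forall j, w (j + N)%N = w j) ->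
  Upsilon Phi z0 (- eta) /\
  ray_word Phi Delta theta z0 (- eta) (fun j => w (N.-1 - j %% N)%N).
Proof.
move=> HPhi _ Hsim Hhigh Hz0 HU Hray HN Hper.
split; first by have := Ups_neg HPhi HU.
have Heta : eta != 0 by case: HU.
have Hspan : forall x : 'rV[R]_n, (forall a, a \in Phi -> dot x a = 0) -> x = 0.
  by case: HPhi.
have HD : forall i, Delta i \in Phi by case: Hsim.
have HT : theta \in Phi by case: Hhigh.
have [k0 _] : exists k : 'I_n, eta 0 k != 0.
  case: (pickP (fun k : 'I_n => eta 0 k != 0)) => [k Hk | H0]; first by exists k.
  exfalso; move/eqP: Heta; apply; apply/rowP => k; rewrite mxE.
  by have := H0 k; move/negbFE/eqP.
have [d Hd HdL] := fin_order Hspan (uact_aff Delta theta w N)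
   (uact_isom HPhi HD HT w N) (uact_phipres HPhi HD HT w N).
case: Hray => t [t0 tinc tunb tray].
have [c Hc] := b_par HPhi Hsim Hper HdL Hspan Heta tinc tray.
exists (tp N d t c); split.
- by [].
- exact: (Tinc HPhi Hsim Hhigh HN Hper Hd HdL Hz0 k0 Heta t0 tinc tray Hc).
- exact: (Tunb HPhi Hsim Hhigh HN Hper Hd HdL Hz0 k0 t0 tinc tray Hc).
- move=> j s h1 h2.
  exact: (Tray HPhi Hsim Hhigh HN Hper Hd HdL Hz0 k0 Heta t0 tinc tray Hc h1 h2).
Qed.
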